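(* Suppose $G$ is an abelian complex reflection group, and let $T$ and $V$ be length-$n$ reflection factorizations which generate $G$, factor the same element of $G$, and have the same multiset of conjugacy classes. Then $T$ and $V$ are Hurwitz equivalent.
   Context: A complex reflection group is a finite group of linear transformations of a complex vector space generated by reflections (linear maps whose fixed space has codimension $1$). A reflection factorization of $g\in G$ of length $n$ is a tuple $(r_1,\dots,r_n)$ of reflections in $G$ with $r_1\cdots r_n=g$; it generates $\langle r_1,\dots,r_n\rangle$. The Hurwitz move $\sigma_i$ ($1\le i<n$) sends $(r_1,\dots,r_n)$ to $(r_1,\dots,r_{i-1},r_{i+1},r_{i+1}^{-1}r_ir_{i+1},r_{i+2},\dots,r_n)$; two factorizations are Hurwitz equivalent if one is obtained from the other by a finite sequence of Hurwitz moves. The multiset of conjugacy classes of a factorization generating $G$ is the multiset of $G$-conjugacy classes of its entries. *)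

(* Defs.v *)
From HB Require Import structures.
From mathcomp Require Import all_boot all_order all_algebra all_fingroup all_solvable.
From mathcomp Require Import all_field all_character.
From Stdlib Require Import Relation_Operators.
Set Implicit Arguments. Unset Strict Implicit. Unset Printing Implicit Defensive.
Import GRing.Theory.
Local Open Scope ring_scope.

(* A complex reflection group is modelled as an abstract finite group G
   together with a faithful complex representation rG : G -> GL_d(algC);
   G is identified with its (isomorphic) image rG(G) <= GL_d(C). *)

Section Reflections.
Variables (gT : finGroupType) (G : {group gT}) (d : nat).
Variable rG : mx_representation algC G d.

Definition reflection_in (g : gT) : bool :=
  (g \in G) && (\rank (rG g - 1%:M)%R == 1)%N.

Definition complex_reflection_group : bool :=
  mx_faithful rG && (G == <<[set g in G | reflection_in g]>>)%g.

Definition reflection_factorization (n : nat) (g : gT) (T : seq gT) : Prop :=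
  [/\ size T = n, all reflection_in T & (\prod_(r <- T) r)%g = g].

Definition generates (T : seq gT) : Prop := (<<[set x in T]>>)%g = G :> {set gT}.

Definition same_class_multiset (T V : seq gT) : bool :=
  perm_eq [seq (x ^: G)%g | x <- T] [seq (x ^: G)%g | x <- V].
End Reflections.

Section Hurwitz.
Variable gT : finGroupType.

(* Hurwitz move sigma_{i+1} (0-based index i):
   (.., r_i, r_{i+1}, ..) |-> (.., r_{i+1}, r_{i+1}^-1 r_i r_{i+1}, ..);
   in mathcomp, x ^ y = y^-1 * x * y. *)
Definition hurwitz_move (i : nat) (s : seq gT) : seq gT :=
  take i s ++ [:: nth 1%g s i.+1; (nth 1%g s i ^ nth 1%g s i.+1)%g] ++ drop i.+2 s.

Definition hurwitz_step (s t : seq gT) : Prop :=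
  exists2 i : nat, (i.+1 < size s)%N & t = hurwitz_move i s.

Definition hurwitz_equiv : seq gT -> seq gT -> Prop :=
  clos_refl_trans (seq gT) hurwitz_step.
End Hurwitz.

(* Main.v *)
Require Import Defs.
From mathcomp Require Import all_boot all_order all_algebra all_fingroup all_solvable.
From mathcomp Require Import all_field all_character.
From Stdlib Require Import Relation_Operators.

Lemma hw_cons (gT : finGroupType) (x : gT) (s t : seq gT) :
  hurwitz_equiv s t -> hurwitz_equiv (x :: s) (x :: t).
Proof.
elim=> [a b [i Hi ->]| a | a b c _ IH1 _ IH2].
- apply: rt_step; exists i.+1 => //.
- exact: rt_refl.
- exact: (rt_trans _ _ _ _ _ IH1 IH2).
Qed.

Arguments hw_cons {gT} x {s t}.

Lemma abel_conj (gT : finGroupType) (G : {group gT}) (x y : gT) :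
  abelian G -> x \in G -> y \in G -> (x ^ y = x)%g.
Proof.
move=> /abelian_classP abG xG yG.
have := memJ_class x yG; rewrite abG // => /set1P //.
Qed.

Arguments abel_conj {gT G x y}.

Lemma move_right (gT : finGroupType) (G : {group gT}) (x : gT) (t1 t2 : seq gT) :
  abelian G -> x \in G -> all (mem G) t1 ->
  hurwitz_equiv (x :: t1 ++ t2) (t1 ++ x :: t2).
Proof.
move=> abG xG; elim: t1 => [|y t1 IH] /=; first by move=> _; exact: rt_refl.
case/andP=> yG Ht1.
apply: (@rt_trans _ _ _ (y :: x :: t1 ++ t2)).
  apply: rt_step; exists 0%N => //.
  by rewrite /hurwitz_move /= drop0 (abel_conj abG xG yG).
exact: hw_cons (IH Ht1).
Qed.

Arguments move_right {gT G x t1 t2}.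

Lemma perm_hw (gT : finGroupType) (G : {group gT}) (s t : seq gT) :
  abelian G -> all (mem G) s -> perm_eq s t -> hurwitz_equiv s t.
Proof.
move=> abG; elim: s t => [|x s IH] t /=.
  by move=> _; rewrite perm_sym => /perm_nilP ->; exact: rt_refl.
case/andP=> xG Hs Hp.
have xt : x \in t by rewrite -(perm_mem Hp) mem_head.
case/splitPr: xt Hp => t1 t2 Hp.
have Hp' : perm_eq s (t1 ++ t2).
  by rewrite -(perm_cons x); apply: (perm_trans Hp); rewrite -(cat1s x (t1 ++ t2)) -(cat1s x t2) perm_catCA.
have Hall : all (mem G) (t1 ++ t2) by rewrite -(perm_all _ Hp').
have H1 : hurwitz_equiv (x :: s) (x :: t1 ++ t2) by apply: hw_cons; exact: IH.
have Ht1 : all (mem G) t1 by move: Hall; rewrite all_cat => /andP[].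
have H2 : hurwitz_equiv (x :: t1 ++ t2) (t1 ++ x :: t2) by exact: (move_right abG xG Ht1).
exact: (rt_trans _ _ _ _ _ H1 H2).
Qed.

Arguments perm_hw {gT G s t}.

Theorem proposition3p1 (gT : finGroupType) (G : {group gT}) (d : nat)
  (rG : mx_representation algC G d) (n : nat) (g : gT) (T V : seq gT) :
  complex_reflection_group rG -> abelian G ->
  reflection_factorization rG n g T -> reflection_factorization rG n g V ->
  generates G T -> generates G V ->
  same_class_multiset G T V ->
  hurwitz_equiv T V.
Proof.
move=> _ abG [_ HT _] [_ HV _] _ _ Hc.
have allG (s : seq gT) : all (reflection_in rG) s -> all (mem G) s.
  by apply: sub_all => x /andP[].
have HTG := allG _ HT; have HVG := allG _ HV.
apply: (perm_hw abG HTG).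
move: Hc; rewrite /same_class_multiset.
have /abelian_classP cl := abG.
have ET : [seq (x ^: G)%g | x <- T] = [seq [set x] | x <- T].
  by apply/eq_in_map => x xT; apply: cl; move/allP: HTG; apply.
have EV : [seq (x ^: G)%g | x <- V] = [seq [set x] | x <- V].
  by apply/eq_in_map => x xV; apply: cl; move/allP: HVG; apply.
rewrite ET EV.
have inj : injective (fun x : gT => [set x]).
  move=> x y /setP/(_ x); rewrite !inE eqxx => /esym/eqP //.
exact: (perm_map_inj inj).
Qed.
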